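(* Let $\mathcal{Y}$ be a finite set and let $\mathcal{P}$ be a finitely generated credal set of probability measures on $\mathcal{Y}$ with set of extreme points $\mathrm{ex}\,\mathcal{P}=\{P^{\text{ex}}_s\}_{s=1}^S$. Let $\Delta^{S-1}=\{\beta=(\beta_1,\ldots,\beta_S)^\top:\beta_s\ge0\ \forall s,\ \sum_s\beta_s=1\}$, $\underline{H}(P^{\text{ex}})=\min_{P^{\text{ex}}\in\mathrm{ex}\,\mathcal{P}}H(P^{\text{ex}})$, $\overline{H}(P^{\text{ex}})=\max_{P^{\text{ex}}\in\mathrm{ex}\,\mathcal{P}}H(P^{\text{ex}})$, and $$l[\mathrm{TU}(\mathcal{P})]=\max\Big\{\sup_{\beta\in\Delta^{S-1}}\sum_{s=1}^S\beta_sH(P^{\text{ex}}_s),\ \overline{H}(P^{\text{ex}})\Big\}.$$ Let $\mathrm{TU}(\mathcal{P})=\sup_{P\in\mathcal{P}}H(P)$, $\mathrm{AU}(\mathcal{P})=\inf_{P\in\mathcal{P}}H(P)$ and $\mathrm{EU}(\mathcal{P})=\mathrm{TU}(\mathcal{P})-\mathrm{AU}(\mathcal{P})$. Then $$\mathrm{TU}(\mathcal{P})\in\Big[l[\mathrm{TU}(\mathcal{P})],\ \sup_{\beta\in\Delta^{S-1}}\sum_{s=1}^S\beta_sH(P^{\text{ex}}_s)+\log_2(S)\Big],\qquad \mathrm{AU}(\mathcal{P})=\underline{H}(P^{\text{ex}}),$$ $$\mathrm{EU}(\mathcal{P})\in\Big[\max\{0,\ l[\mathrm{TU}(\mathcal{P})]-\underline{H}(P^{\text{ex}})\},\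 \sup_{\beta\in\Delta^{S-1}}\sum_{s=1}^S\beta_sH(P^{\text{ex}}_s)+\log_2(S)-\underline{H}(P^{\text{ex}})\Big].$$
   Context: A credal set is a closed convex set of probability measures; it is finitely generated if it has finitely many extreme points (elements not expressible as convex combinations of the others). For a probability measure $P$ on finite $\mathcal{Y}$, $H(P)=-\sum_{y\in\mathcal{Y}}P(\{y\})\log_2P(\{y\})$ is the Shannon entropy. *)

(* Defs.v *)
From HB Require Import structures.
From mathcomp Require Import all_boot all_order all_algebra.
From mathcomp Require Import all_classical all_reals all_analysis.
Set Implicit Arguments. Unset Strict Implicit. Unset Printing Implicit Defensive.
Import Order.TTheory GRing.Theory Num.Theory.
Local Open Scope classical_set_scope.
Local Open Scope ring_scope.

Section Defs.
Variables (R : realType).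

Definition log2 (x : R) : R := ln x / ln 2.

Definition entropy (Y : finType) (p : Y -> R) : R :=
  - \sum_(y : Y) (if p y == 0 then 0 else p y * log2 (p y)).

Definition is_prob (Y : finType) (p : Y -> R) : Prop :=
  (forall y, 0 <= p y) /\ \sum_(y : Y) p y = 1.

Definition simplex (S : nat) : set ('I_S -> R) :=
  [set b | (forall s, 0 <= b s) /\ \sum_(s < S) b s = 1].

Definition mix (Y : finType) (S : nat) (q : 'I_S -> Y -> R) (b : 'I_S -> R)
  : Y -> R := fun y => \sum_(s < S) b s * q s y.

Definition conv_hull (Y : finType) (S : nat) (q : 'I_S -> Y -> R) : set (Y -> R) :=
  [set mix q b | b in @simplex S].

Definition convex_set (Y : finType) (C : set (Y -> R)) : Prop :=
  forall p q t, C p -> C q -> 0 <= t <= 1 ->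
    C (fun y => t * p y + (1 - t) * q y).

Definition extreme_point (Y : finType) (C : set (Y -> R)) (x : Y -> R) : Prop :=
  C x /\
  ~ (exists (n : nat) (q : 'I_n -> Y -> R) (b : 'I_n -> R),
        (forall i, C (q i) /\ q i <> x) /\ @simplex n b /\ x = mix q b).

Definition TU (Y : finType) (C : set (Y -> R)) : R :=
  sup [set entropy p | p in C].
Definition AU (Y : finType) (C : set (Y -> R)) : R :=
  inf [set entropy p | p in C].
Definition EU (Y : finType) (C : set (Y -> R)) : R := TU C - AU C.

End Defs.
Arguments simplex : clear implicits.

(* Main.v *)
Require Import Defs.
From HB Require Import structures.
From mathcomp Require Import all_boot all_order all_algebra.
From mathcomp Require Import all_classical all_reals all_analysis.
From mathcomp Require Import lra ring.
Import Order.TTheory GRing.Theory Num.Theory.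
Local Open Scope classical_set_scope.
Local Open Scope ring_scope.

Set Implicit Arguments.
Section H.
Variable R : realType.
Implicit Types x y p b : R.
Lemma ln_le_sub1 x : 0 < x -> ln x <= x - 1.
Proof.
move=> x0; have := @le_ln1Dx R (x - 1).
by rewrite addrCA subrr addr0; apply; lra.
Qed.

Lemma term_concave b x p : 0 <= b -> 0 <= x -> b * x <= p ->
  b * (- (x * ln x)) <= b * (x * (- ln p) - x + p).
Proof.
move=> b0 x0 bxp.
have [->|bn0] := eqVneq b 0; first by rewrite !mul0r.
have [xe|xn0] := eqVneq x 0.
  rewrite xe mulr0 in bxp; rewrite xe !(mul0r, oppr0, addr0, add0r, subr0, mulr0); exact: mulr_ge0.
apply: ler_wpM2l => //.
have xp : 0 < x by rewrite lt_def xn0 x0.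
have bp : 0 < b by rewrite lt_def bn0 b0.
have pp : 0 < p by apply: lt_le_trans bxp; rewrite mulr_gt0.
have h := ln_le_sub1 _ (divr_gt0 pp xp).
rewrite ln_div ?posrE // in h.
have := ler_wpM2l (ltW xp) h.
rewrite mulrBr mulrBr mulr1 mulrCA divff ?mulr1 //.
move=> H; rewrite -mulrN; lra.
Qed.

Lemma term_upper b x p : 0 <= b -> 0 <= x -> b * x <= p ->
  b * x * (- ln p) <= b * x * (- ln b) + b * (- (x * ln x)).
Proof.
move=> b0 x0 bxp.
have [->|bn0] := eqVneq b 0; first by rewrite !mul0r add0r.
have [->|xn0] := eqVneq x 0; first by rewrite !(mulr0, mul0r, oppr0, addr0).
have xp : 0 < x by rewrite lt_def xn0 x0.
have bp : 0 < b by rewrite lt_def bn0 b0.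
have bxp0 : 0 < b * x by rewrite mulr_gt0.
have pp : 0 < p by apply: lt_le_trans bxp.
have : ln (b * x) <= ln p by rewrite ler_ln ?posrE.
rewrite lnM ?posrE // => H.
have := ler_wpM2l (ltW bxp0) H.
move=> H2.
have -> : b * (- (x * ln x)) = b * x * (- ln x) by rewrite mulrN mulrN mulrA.
rewrite -mulrDr; rewrite -[X in X <= _]opprK -[X in _ <= X]opprK lerN2 -!mulrN opprD !opprK.
by [].
Qed.

Lemma term_entb b (S : nat) : (0 < S)%N -> 0 <= b ->
  - (b * ln b) <= ln (S%:R) * b + ((S%:R)^-1 - b).
Proof.
move=> S0 b0.
have Sp : 0 < (S%:R : R) by rewrite ltr0n.
have [->|bn0] := eqVneq b 0.
  rewrite !(mul0r, mulr0, oppr0, add0r, subr0, addr0).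
  by apply: ltW; rewrite invr_gt0.
have bp : 0 < b by rewrite lt_def bn0 b0.
have Sbp : 0 < S%:R * b by rewrite mulr_gt0.
have Sbi : 0 < (S%:R * b)^-1 by rewrite invr_gt0.
have h := ln_le_sub1 _ Sbi.
rewrite lnV ?posrE // lnM ?posrE // in h.
have := ler_wpM2l b0 h.
rewrite invfM mulrBr mulr1 mulrCA divff ?mulr1 ?gt_eqF //.
move=> H; lra.
Qed.

End H.
Section H2.
Variable R : realType.

Definition Hln (Y : finType) (p : Y -> R) : R := - \sum_(y : Y) p y * ln (p y).
Arguments Hln {Y}.

Lemma entropyE (Y : finType) (p : Y -> R) : entropy p = Hln p * (ln 2)^-1.
Proof.
rewrite /entropy /Hln /log2 mulNr mulr_suml; congr (- _); apply: eq_bigr => y _.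
by case: eqP => [->|_]; [rewrite !mul0r | rewrite mulrA].
Qed.

Lemma mix_ge (Y : finType) (S : nat) (q : 'I_S -> Y -> R) (b : 'I_S -> R)
  (hq : forall s y, 0 <= q s y) (hb : simplex R S b) s y :
  b s * q s y <= mix q b y.
Proof.
rewrite /mix (bigD1 s) //= lerDl; apply: sumr_ge0 => i _.
by apply: mulr_ge0; [case: hb|].
Qed.

Lemma concave_H (Y : finType) (S : nat) (q : 'I_S -> Y -> R) (b : 'I_S -> R)
  (hq : forall s y, 0 <= q s y) (hb : simplex R S b) :
  \sum_(s < S) b s * Hln (q s) <= Hln (mix q b).
Proof.
have step : forall y, \sum_(s < S) b s * (- (q s y * ln (q s y)))
    <= - (mix q b y * ln (mix q b y)).
  move=> y; set p := mix q b y.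
  apply: (le_trans (y := \sum_(s < S) b s * (q s y * - ln p - q s y + p))).
    apply: ler_sum => s _; apply: term_concave; [exact: (proj1 hb s)|exact: hq|exact: mix_ge].
  have -> : \sum_(s < S) b s * (q s y * - ln p - q s y + p)
      = \sum_(s < S) ((b s * q s y) * (- ln p - 1) + b s * p).
    by apply: eq_bigr => s _; ring.
  rewrite big_split /= -mulr_suml -mulr_suml (proj2 hb).
  have -> : \sum_(i < S) b i * q i y = p by [].
  by rewrite le_eqVlt; apply/orP; left; apply/eqP; ring.
have E : forall s, b s * Hln (q s) = \sum_(y : Y) b s * (- (q s y * ln (q s y))).
  by move=> s; rewrite /Hln -sumrN mulr_sumr.
rewrite (eq_bigr _ (fun s _ => E s)) exchange_big /Hln -sumrN.
by apply: ler_sum => y _; exact: step.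
Qed.

Lemma entb_le (S : nat) (b : 'I_S -> R) (hS : (0 < S)%N) (hb : simplex R S b) :
  \sum_(s < S) - (b s * ln (b s)) <= ln (S%:R).
Proof.
apply: (le_trans (y := \sum_(s < S) (ln (S%:R) * b s + ((S%:R)^-1 - b s)))).
  by apply: ler_sum => s _; apply: term_entb; [exact: hS|exact: (proj1 hb s)].
rewrite big_split /= sumrB -mulr_sumr (proj2 hb) sumr_const card_ord mulr1.
rewrite -[_^-1 *+ S]mulr_natr mulVf ?subrr ?addr0 //.
by rewrite pnatr_eq0 -lt0n.
Qed.

Lemma upper_H (Y : finType) (S : nat) (q : 'I_S -> Y -> R) (b : 'I_S -> R)
  (hS : (0 < S)%N)
  (hq : forall s, is_prob (q s)) (hb : simplex R S b) :
  Hln (mix q b) <= \sum_(s < S) b s * Hln (q s) + ln (S%:R).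
Proof.
have hq0 : forall s y, 0 <= q s y by move=> s y; case: (hq s).
have step : forall y, - (mix q b y * ln (mix q b y)) <=
   \sum_(s < S) (b s * q s y * (- ln (b s)) + b s * (- (q s y * ln (q s y)))).
  move=> y; set p := mix q b y.
  have -> : - (p * ln p) = \sum_(s < S) b s * q s y * (- ln p).
    by rewrite -mulr_suml mulrN.
  apply: ler_sum => s _; apply: term_upper; [exact: (proj1 hb s)|exact: hq0|].
  exact: mix_ge.
apply: (le_trans (y := \sum_(y : Y) \sum_(s < S) (b s * q s y * (- ln (b s)) + b s * (- (q s y * ln (q s y)))))).
  by rewrite /Hln -sumrN; apply: ler_sum => y _; exact: step.
rewrite exchange_big /=; under eq_bigr do rewrite big_split /=.
rewrite big_split /= addrC lerD //.
  by apply: ler_sum => s _; rewrite /Hln -sumrN mulr_sumr.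
apply: le_trans (entb_le hS hb); apply: ler_sum => s _.
under eq_bigr do rewrite mulrAC.
by rewrite -mulr_sumr (proj2 (hq s)) mulr1 mulrN.
Qed.
End H2.

Theorem theorem3 (R : realType) (Y : finType) (S : nat)
  (C : set (Y -> R)) (Pex : 'I_S -> Y -> R)
  (hS : (0 < S)%N)
  (hprob : forall s, is_prob (Pex s))
  (hinj : injective Pex)
  (hC : C = conv_hull Pex)
  (hex : [set p | extreme_point C p] = range Pex) :
  let Hlow := inf [set entropy (Pex s) | s in [set: 'I_S]] in
  let Hup := sup [set entropy (Pex s) | s in [set: 'I_S]] in
  let sb := sup [set \sum_(s < S) b s * entropy (Pex s) | b in @simplex R S] in
  let lTU := Num.max sb Hup in
  (lTU <= TU C <= sb + log2 (S%:R : R)) /\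
  AU C = Hlow /\
  (Num.max 0 (lTU - Hlow) <= EU C <= sb + log2 (S%:R : R) - Hlow).
Proof.
move=> Hlow Hup sb lTU.
have c0 : 0 < (ln 2 : R)^-1 by rewrite invr_gt0 ln_gt0 // ltr1n.
have hq0 : forall s y, 0 <= Pex s y by move=> s y; case: (hprob s).
pose s0 := Ordinal hS.
pose M := \sum_(s < S) `|entropy (Pex s)|.
have HM : forall s, `|entropy (Pex s)| <= M.
  move=> s; rewrite /M (bigD1 s) //= lerDl; apply: sumr_ge0 => i _; exact: normr_ge0.
have delta : forall t, simplex R S (fun s => (s == t)%:R) /\
    mix Pex (fun s => (s == t)%:R) = Pex t.
  move=> t; split; first split.
  - by move=> s; exact: ler0n.
  - by rewrite (bigD1 t) //= eqxx big1 ?addr0 // => s /negbTE ->.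
  - apply: funext => y; rewrite /mix (bigD1 t) //= eqxx mul1r big1 ?addr0 //.
    by move=> s /negbTE ->; rewrite mul0r.
have inC : forall b, simplex R S b -> C (mix Pex b) by rewrite hC => b hb; exists b.
have vC : forall s, C (Pex s).
  by move=> s; have [h1 h2] := delta s; rewrite -h2; exact: inC.
have Cmix : forall p, C p -> exists2 b, simplex R S b & mix Pex b = p.
  by rewrite hC => p [b hb <-]; exists b.
have concE : forall b, simplex R S b ->
    \sum_(s < S) b s * entropy (Pex s) <= entropy (mix Pex b).
  move=> b hb; under eq_bigr do rewrite entropyE mulrA.
  rewrite -mulr_suml entropyE; apply: ler_wpM2r; [exact: ltW c0|exact: concave_H].
have upE : forall b, simplex R S b ->
    entropy (mix Pex b) <= \sum_(s < S) b s * entropy (Pex s) + log2 (S%:R : R).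
  move=> b hb; under eq_bigr do rewrite entropyE mulrA.
  rewrite -mulr_suml entropyE /log2 -mulrDl.
  apply: ler_wpM2r; [exact: ltW c0|exact: upper_H].
have sbset_ub : forall b, simplex R S b -> \sum_(s < S) b s * entropy (Pex s) <= M.
  move=> b hb; apply: (le_trans (y := \sum_(s < S) b s * M)).
    apply: ler_sum => s _; apply: ler_wpM2l; first exact: (proj1 hb s).
    exact: le_trans (ler_norm _) (HM s).
  by rewrite -mulr_suml (proj2 hb) mul1r.
have hasub_sb : has_ubound [set \sum_(s < S) b s * entropy (Pex s) | b in @simplex R S].
  by exists M => _ [b hb <-]; exact: sbset_ub.
have sb_ge : forall b, simplex R S b -> \sum_(s < S) b s * entropy (Pex s) <= sb.
  by move=> b hb; apply: (ub_le_sup hasub_sb); exists b.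
have C_ub : forall p, C p -> entropy p <= sb + log2 (S%:R : R).
  move=> p /Cmix [b hb <-]; apply: le_trans (upE b hb) _; rewrite lerD2r; exact: sb_ge.
have hasub_C : has_ubound [set entropy p | p in C].
  by exists (sb + log2 (S%:R : R)) => _ [p Cp <-]; exact: C_ub.
have C_le_TU : forall p, C p -> entropy p <= TU C.
  by move=> p Cp; apply: (ub_le_sup hasub_C); exists p.
have neC : [set entropy p | p in C] !=set0.
  by exists (entropy (Pex s0)); exists (Pex s0) => //; exact: vC.
have TU_ub : TU C <= sb + log2 (S%:R : R).
  by rewrite /TU; apply: ge_sup neC _ => _ [p Cp <-]; exact: C_ub.
have neSB : [set \sum_(s < S) b s * entropy (Pex s) | b in @simplex R S] !=set0.
  by eexists; exists (fun s => (s == s0)%:R) => //; exact: (proj1 (delta s0)).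
have sb_le_TU : sb <= TU C.
  apply: ge_sup neSB _ => _ [b hb <-].
  exact: le_trans (concE b hb) (C_le_TU _ (inC b hb)).
have neV : [set entropy (Pex s) | s in [set: 'I_S]] !=set0.
  by exists (entropy (Pex s0)); exists s0.
have Hup_le : Hup <= TU C.
  by apply: ge_sup neV _ => _ [s _ <-]; exact: C_le_TU (vC s).
have haslb_V : has_lbound [set entropy (Pex s) | s in [set: 'I_S]].
  exists (- M) => _ [s _ <-]; rewrite lerNl; apply: le_trans (HM s).
  by rewrite -normrN; exact: ler_norm.
have Hlow_le : forall s, Hlow <= entropy (Pex s).
  by move=> s; apply: (ge_inf haslb_V); exists s.
have C_lb : forall p, C p -> Hlow <= entropy p.
  move=> p /Cmix [b hb <-]; apply: le_trans (concE b hb).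
  apply: (le_trans (y := \sum_(s < S) b s * Hlow)).
    by rewrite -mulr_suml (proj2 hb) mul1r.
  by apply: ler_sum => s _; apply: ler_wpM2l; [exact: (proj1 hb s)|exact: Hlow_le].
have haslb_C : has_lbound [set entropy p | p in C].
  by exists Hlow => _ [p Cp <-]; exact: C_lb.
have AUeq : AU C = Hlow.
  apply/eqP; rewrite eq_le; apply/andP; split.
    apply: lb_le_inf neV _ => _ [s _ <-].
    by apply: (ge_inf haslb_C); exists (Pex s) => //; exact: vC.
  by apply: lb_le_inf neC _ => _ [p Cp <-]; exact: C_lb.
have lTU_le : lTU <= TU C by rewrite /lTU ge_max sb_le_TU Hup_le.
have HlowTU : Hlow <= TU C := le_trans (Hlow_le s0) (C_le_TU _ (vC s0)).
split; first by rewrite lTU_le TU_ub.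
split; first exact: AUeq.
by rewrite /EU AUeq ge_max subr_ge0 HlowTU lerD2r lTU_le /= lerD2r TU_ub.
Qed.
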